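(* For every ordinal $\beta\leq\omega_1$ and every $\alpha<\beta$, in $\mathbb{S}(\beta)$ the fiber $I\times\{\alpha\}$ belongs to $\sigma(\llbracket\mathcal{L}\rrbracket)$.
   Context: An LMP is $(S,\Sigma,\{\tau_a\}_{a\in L})$ with $L$ countable and Markov kernels $\tau_a$. The logic $\mathcal{L}$ has formulas $\phi::=\top\mid\phi\wedge\psi\mid\langle a\rangle_{>q}\phi$ ($a\in L$, $q\in\mathbb{Q}\cap[0,1]$) with $\llbracket\top\rrbracket=S$, $\llbracket\phi\wedge\psi\rrbracket=\llbracket\phi\rrbracket\cap\llbracket\psi\rrbracket$, $\llbracket\langle a\rangle_{>q}\phi\rrbracket=\{s:\tau_a(s,\llbracket\phi\rrbracket)>q\}$; $\sigma(\llbracket\mathcal{L}\rrbracket)$ is the $\sigma$-algebra generated by all $\llbracket\phi\rrbracket$. The processes $\mathbb{S}(\beta)$: $I=(0,1)$, $\mathfrak{m}$ Lebesgue measure, $V\subseteq I$ Lebesgue nonmeasurable, $\mathcal{B}_V=\sigma(\mathcal{B}(I)\cup\{V\})$, and $\mathfrak{m}_0,\mathfrak{m}_1$ measures on $\mathcal{B}_V$ extending $\mathfrak{m}$ with $\mathfrak{m}_0(V)\neq\mathfrak{m}_1(V)$. Let $\{q_n\}_{n\in\omega}$ enumerate $\mathbb{Q}\cap I$. For ordinals $\eta$: $\alpha_n(0)=0$, $\alpha_n(\zeta+1)=\zeta$ for all $n$, and for limit $\lambda$, $(\alpha_n(\lambda))_{n\in\omega}$ is a fixed strictly increasing sequence of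 nonzero ordinals below $\lambda$ cofinal in $\lambda$. For an ordinal $\beta\leq\omega_1$, $\mathbb{S}(\beta)=(I\times\beta,\ \mathcal{B}_V\otimes\mathcal{P}(\beta),\ \{\tau_n\}_{n\in\omega})$ with $\tau_n((x,\eta),A)=x\cdot\mathfrak{m}_0(A_0)$ if $\eta=0$; $=\mathfrak{m}_0(A_{\alpha_n(\eta)})$ if $\eta>0$ and $x<q_n$; $=\mathfrak{m}_1(A_{\alpha_n(\eta)})$ if $\eta>0$ and $x\geq q_n$; here $A_\gamma=\{r:(r,\gamma)\in A\}$. These $\tau_n$ are Markov kernels, so $\mathbb{S}(\beta)$ is an LMP. *)

(* Defs.v *)
From mathcomp Require Import all_boot all_order all_algebra.
From mathcomp Require Import all_classical all_reals all_analysis.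
Import Order.TTheory GRing.Theory Num.Theory.
Import numFieldNormedType.Exports.

Set Implicit Arguments.
Unset Strict Implicit.
Unset Printing Implicit Defensive.

Local Open Scope classical_set_scope.
Local Open Scope ring_scope.

(* An ordinal beta <= omega_1 is represented (up to isomorphism) by a
   carrier type B (= the set of ordinals < beta) with a strict well-order
   lt all of whose proper initial segments are countable. *)
Definition ordinal_le_omega1 (B : Type) (lt : B -> B -> Prop) : Prop :=
  [/\ (forall x, ~ lt x x),
      (forall x y z, lt x y -> lt y z -> lt x z),
      (forall x y, [\/ lt x y, x = y | lt y x]),
      well_founded lt &
      (forall b, countable [set c | lt c b])].

Definition is_zero (B : Type) (lt : B -> B -> Prop) (eta : B) : Prop :=
  forall g, ~ lt g eta.

Definition is_succ (B : Type) (lt : B -> B -> Prop) (zeta eta : B) : Prop :=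
  lt zeta eta /\ (forall g, lt g eta -> lt g zeta \/ g = zeta).

Definition is_limit (B : Type) (lt : B -> B -> Prop) (eta : B) : Prop :=
  ~ is_zero lt eta /\ ~ (exists zeta, is_succ lt zeta eta).

Definition alpha_spec (B : Type) (lt : B -> B -> Prop) (alpha : nat -> B -> B)
  : Prop :=
  [/\ (forall n eta, is_zero lt eta -> alpha n eta = eta),
      (forall n zeta eta, is_succ lt zeta eta -> alpha n eta = zeta) &
      (forall lam, is_limit lt lam ->
         [/\ (forall n, lt (alpha n lam) (alpha n.+1 lam)),
             (forall n, ~ is_zero lt (alpha n lam) /\ lt (alpha n lam) lam) &
             (forall g, lt g lam -> exists n, lt g (alpha n lam))])].

Definition Iset (R : realType) : set R := [set x : R | 0 < x < 1].
Arguments Iset : clear implicits.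

Definition lebesgue_measurable (R : realType) (A : set R) : Prop :=
  ((@wlength R idfun)^*%mu).-cara.-measurable A.

(* B_V = sigma(B(I) u {V}), a sigma-algebra on the universe I; B(I) is the
   set of Borel subsets of I. *)
Definition BV (R : realType) (V : set R) : set (set R) :=
  <<s Iset R, [set A | A `<=` Iset R /\ measurable A] `|` [set V] >>.

Definition measure_on (T : Type) (R : realType) (D : set (set T))
  (mu : set T -> \bar R) : Prop :=
  [/\ mu set0 = 0%E,
      (forall A, D A -> (0 <= mu A)%E) &
      (forall F : nat -> set T, (forall n, D (F n)) -> trivIset setT F ->
         (fun n => \sum_(0 <= k < n) mu (F k))%E @ \oo
           --> mu (\bigcup_n F n))].

Definition extends_lebesgue (R : realType) (mu : set R -> \bar R) : Prop :=
  forall A, A `<=` Iset R -> measurable A -> mu A = lebesgue_measure A.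

Definition rat_enum (R : realType) (q : nat -> R) : Prop :=
  [/\ injective q,
      (forall n, exists r : rat, q n = ratr r),
      (forall n, 0 < q n < 1) &
      (forall r : rat, 0 < r < 1 -> exists n, q n = ratr r)].

Definition section (R : realType) (B : Type) (A : set (R * B)) (g : B)
  : set R := [set r | A (r, g)].

Definition Sstate (R : realType) (B : Type) : set (R * B) :=
  Iset R `*` [set: B].
Arguments Sstate : clear implicits.

Definition tauS (R : realType) (B : Type) (lt : B -> B -> Prop)
  (alpha : nat -> B -> B) (q : nat -> R) (m0 m1 : set R -> \bar R)
  (n : nat) (s : R * B) (A : set (R * B)) : \bar R :=
  if pselect (is_zero lt s.2) then ((s.1)%:E * m0 (section A s.2))%E
  else if s.1 < q n then m0 (section A (alpha n s.2))
  else m1 (section A (alpha n s.2)).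

Inductive form : Type :=
  | FTop : form
  | FAnd : form -> form -> form
  | FDiam : nat -> rat -> form -> form.

Fixpoint wf_form (f : form) : bool :=
  match f with
  | FTop => true
  | FAnd f g => wf_form f && wf_form g
  | FDiam _ r f => (0 <= r <= 1) && wf_form f
  end.

Fixpoint sem (R : realType) (T : Type) (S : set T)
  (tau : nat -> T -> set T -> \bar R) (f : form) : set T :=
  match f with
  | FTop => S
  | FAnd f g => sem S tau f `&` sem S tau g
  | FDiam a r f => [set s | S s /\ ((ratr r)%:E < tau a s (sem S tau f))%E]
  end.

Definition sigma_L (R : realType) (T : Type) (S : set T)
  (tau : nat -> T -> set T -> \bar R) : set (set T) :=
  <<s S, [set sem S tau f | f in [set f | wf_form f]] >>.

(* Main.v *)
Require Import Defs.
From mathcomp Require Import all_boot all_order all_algebra.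
From mathcomp Require Import all_classical all_reals all_analysis.
Import Order.TTheory GRing.Theory Num.Theory.
Local Open Scope classical_set_scope.
Local Open Scope ring_scope.
From mathcomp Require Import lra.
Set Implicit Arguments.
Unset Strict Implicit.

Fixpoint Dw (B : Type) (lt : B -> B -> Prop) (alpha : nat -> B -> B)
  (w : seq nat) (g : B) : Prop :=
  match w with
  | [::] => ~ is_zero lt g /\ ~ is_zero lt (alpha 0%N g)
  | n :: w' => ~ is_zero lt g /\ @Dw B lt alpha w' (alpha n g)
  end.

Lemma zero_uniq (B : Type) (lt : B -> B -> Prop) :
  ordinal_le_omega1 lt -> forall a b, is_zero lt a -> is_zero lt b -> a = b.
Proof.
move=> [_ _ tri _ _] a b za zb.
by case: (tri a b) => // h; [case: (zb a)|case: (za b)].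
Qed.

Lemma succ_uniq (B : Type) (lt : B -> B -> Prop) :
  ordinal_le_omega1 lt -> forall z a b, is_succ lt z a -> is_succ lt z b -> a = b.
Proof.
move=> [irr tr tri _ _] z a b [za ha] [zb hb].
case: (tri a b) => // h.
- case: (hb _ h) => [h'|e]; first by case: (irr z); exact: tr za h'.
  by subst a; case: (irr z).
- case: (ha _ h) => [h'|e]; first by case: (irr z); exact: tr zb h'.
  by subst b; case: (irr z).
Qed.

Lemma trichot (B : Type) (lt : B -> B -> Prop) (g : B) :
  [\/ is_zero lt g, exists z, is_succ lt z g | is_limit lt g].
Proof.
case: (boolp.EM (is_zero lt g)) => [?|nz]; first by apply: Or31.
case: (boolp.EM (exists z, is_succ lt z g)) => [?|ns]; first by apply: Or32.
by apply: Or33.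
Qed.

Lemma alpha_lt (B : Type) (lt : B -> B -> Prop) alpha :
  alpha_spec lt alpha -> forall n g, ~ is_zero lt g -> lt (alpha n g) g.
Proof.
move=> [_ hs hl] n g nz.
case: (trichot lt g) => [//|[z sz]|lg].
- by rewrite (hs n z g sz); case: sz.
- by case: (hl g lg) => _ /(_ n) [].
Qed.

Lemma alpha_zero_iff (B : Type) (lt : B -> B -> Prop) alpha :
  alpha_spec lt alpha -> forall n g, ~ is_zero lt g ->
  (is_zero lt (alpha n g) <-> is_zero lt (alpha 0%N g)).
Proof.
move=> [_ hs hl] n g nz.
case: (trichot lt g) => [//|[z sz]|lg].
- by rewrite (hs n z g sz) (hs 0%N z g sz).
- case: (hl g lg) => _ h2 _; split => h.
  + by case: (h2 n).
  + by case: (h2 0%N).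
Qed.

Lemma Dw_inj (B : Type) (lt : B -> B -> Prop) alpha :
  ordinal_le_omega1 lt -> alpha_spec lt alpha ->
  forall a b, ~ is_zero lt a -> ~ is_zero lt b ->
  (forall w, Dw lt alpha w a <-> Dw lt alpha w b) -> a = b.
Proof.
move=> ord asp; have [irr tr tri wf _] := ord.
have [_ hs hl] := asp.
move=> a; elim: (wf a) => {}a _ IH b nza nzb hD.
have eqn : forall n, alpha n a = alpha n b.
  move=> n.
  have h0 : is_zero lt (alpha 0%N a) <-> is_zero lt (alpha 0%N b).
    have := hD [::]; rewrite /=; split => h.
    - apply: boolp.contrapT => hb. have [_ ] := (proj2 (hD [::])) (conj nzb hb). by [].
    - apply: boolp.contrapT => ha. have [_ ] := (proj1 (hD [::])) (conj nza ha). by [].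
  case: (boolp.EM (is_zero lt (alpha n a))) => za.
  - apply: (zero_uniq ord za).
    by apply/(alpha_zero_iff asp n nzb)/h0/(alpha_zero_iff asp n nza).
  - have zb : ~ is_zero lt (alpha n b).
      by move=> /(alpha_zero_iff asp n nzb) /h0 /(alpha_zero_iff asp n nza).
    apply: (IH (alpha n a) (alpha_lt asp n nza)) => //.
    move=> w; split => h.
    + by have [] := (proj1 (hD (n :: w))) (conj nza h).
    + by have [] := (proj2 (hD (n :: w))) (conj nzb h).
case: (trichot lt a) => [//|[z sz]|la]; case: (trichot lt b) => [//|[z' sz']|lb].
- have ezz : z = z' by rewrite -(hs 0%N z a sz) -(hs 0%N z' b sz') eqn.
  by subst z'; exact: (succ_uniq ord sz sz').
- case: (hl b lb) => hinc _ _.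
  have := hinc 0%N; rewrite -!eqn (hs 0%N z a sz) (hs 1%N z a sz).
  by move/irr.
- case: (hl a la) => hinc _ _.
  have := hinc 0%N; rewrite !eqn (hs 0%N z' b sz') (hs 1%N z' b sz').
  by move/irr.
- case: (hl a la) => _ ha2 ha3; case: (hl b lb) => _ hb2 hb3.
  case: (tri a b) => // h.
  + have [n hn] := hb3 _ h. rewrite -eqn in hn.
    case: (irr a); apply: tr hn _; by case: (ha2 n).
  + have [n hn] := ha3 _ h. rewrite eqn in hn.
    case: (irr b); apply: tr hn _; by case: (hb2 n).
Qed.
Lemma tau_z (R : realType) (B : Type) (lt : B -> B -> Prop) alpha (q : nat -> R) m0 m1 n
  (s : R * B) A : is_zero lt s.2 ->
  tauS lt alpha q m0 m1 n s A = (s.1%:E * m0 (section A s.2))%E.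
Proof. move=> h; rewrite /tauS; by destruct (pselect _). Qed.

Lemma tau_nz (R : realType) (B : Type) (lt : B -> B -> Prop) alpha (q : nat -> R) m0 m1 n
  (s : R * B) A c : ~ is_zero lt s.2 ->
  m0 (section A (alpha n s.2)) = c -> m1 (section A (alpha n s.2)) = c ->
  tauS lt alpha q m0 m1 n s A = c.
Proof. move=> h h0 h1; rewrite /tauS; destruct (pselect _) => //; by destruct (_ < _). Qed.

Lemma sec_eq (R : realType) (B : Type) (Q : R * B -> Prop) g :
  section [set s | Sstate R B s /\ Q s] g = [set x | Iset R x /\ Q (x, g)].
Proof. by apply/seteqP; split => x /=; [case=> [[]]|case]. Qed.

Lemma sec_S (R : realType) (B : Type) g : section (Sstate R B) g = Iset R.
Proof. by apply/seteqP; split => x /=; [case|]. Qed.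

Lemma sec_D1 (R : realType) (B : Type) (D : B -> Prop) g : D g ->
  section [set s | Sstate R B s /\ D s.2] g = Iset R.
Proof. by move=> h; rewrite sec_eq; apply/seteqP; split => x /=; [case|]. Qed.

Lemma sec_D0 (R : realType) (B : Type) (D : B -> Prop) g : ~ D g ->
  section [set s | Sstate R B s /\ D s.2] g = set0.
Proof. by move=> h; rewrite sec_eq; apply/seteqP; split => x /=; [case|]. Qed.

Lemma ratr_half (R : realType) : ratr (2^-1 : rat) = (2^-1 : R).
Proof. by rewrite fmorphV rmorph_nat. Qed.
Lemma mfacts (R : realType) (m : set R -> \bar R) : extends_lebesgue m ->
  [/\ m set0 = 0%E, m (Iset R) = 1%E & m [set x | 2^-1 < x < 1] = (2^-1)%:E].
Proof.
move=> e; split.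
- by rewrite e ?measure0//.
- have -> : Iset R = `]0, 1[%classic by rewrite set_itvoo.
  rewrite e; first by rewrite lebesgue_measure_itv /= lte_fin ltr01 -EFinB subr0.
  + by move=> x; rewrite /= in_itv.
  + exact: measurable_itv.
- have -> : [set x : R | 2^-1 < x < 1] = `]2^-1, 1[%classic by rewrite set_itvoo.
  rewrite e; last exact: measurable_itv.
  + rewrite lebesgue_measure_itv /= lte_fin ifT; last by rewrite invf_lt1 // ltr1n.
    by rewrite -EFinB; congr EFin; lra.
  + move=> x; rewrite /= => /andP[h h1]; apply/andP; split => //.
    by apply: lt_trans h; rewrite invr_gt0 ltr0n.
Qed.

Lemma sem_diam (R : realType) (T : Type) (S : set T) (tau : nat -> T -> set T -> \bar R) n r f :
  sem S tau (FDiam n r f) = [set s | S s /\ ((ratr r)%:E < tau n s (sem S tau f))%E].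
Proof. by []. Qed.

Definition half : rat := 2^-1.
Definition Phi0 := FDiam 0 half FTop.
Definition Phi1 := FDiam 0 half Phi0.

Lemma sem_Phi0 (R : realType) (B : Type) (lt : B -> B -> Prop) alpha (q : nat -> R) m0 m1 :
  extends_lebesgue m0 -> extends_lebesgue m1 ->
  sem (Sstate R B) (tauS lt alpha q m0 m1) Phi0 =
  [set s | Sstate R B s /\ (is_zero lt s.2 -> 2^-1 < s.1)].
Proof.
move=> e0 e1; have [_ I0 _] := mfacts e0; have [_ I1 _] := mfacts e1.
rewrite /= /half ratr_half; apply/seteqP; split => -[x g] /= [Ss H]; split => //.
- move=> zg; move: H; rewrite tau_z // sec_S I0 mule1 lte_fin. done.
- case: (pselect (is_zero lt g)) => zg.
  + rewrite tau_z // sec_S I0 mule1 lte_fin; exact: H zg.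
  + have -> : tauS lt alpha q m0 m1 0 (x,g) (Sstate R B) = 1%E.
      by apply: tau_nz; rewrite ?sec_S.
    by rewrite lte_fin invf_lt1 // ltr1n.
Qed.

Lemma sem_Phi1 (R : realType) (B : Type) (lt : B -> B -> Prop) alpha (q : nat -> R) m0 m1 :
  extends_lebesgue m0 -> extends_lebesgue m1 ->
  sem (Sstate R B) (tauS lt alpha q m0 m1) Phi1 =
  [set s | Sstate R B s /\ (~ is_zero lt s.2 /\ ~ is_zero lt (alpha 0%N s.2))].
Proof.
move=> e0 e1; have [_ I0 H0] := mfacts e0; have [_ I1 H1] := mfacts e1.
have secz : forall g, is_zero lt g ->
  section [set s | Sstate R B s /\ (is_zero lt s.2 -> 2^-1 < s.1)] g =
  [set x | 2^-1 < x < 1].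
  move=> g zg; rewrite sec_eq; apply/seteqP; split => x /=.
  - by case=> /andP[_ h1] /(_ zg) h; apply/andP.
  - move=> /andP[h h1]; split => //; apply/andP; split => //.
    by apply: lt_trans h; rewrite invr_gt0 ltr0n.
have secnz : forall g, ~ is_zero lt g ->
  section [set s | Sstate R B s /\ (is_zero lt s.2 -> 2^-1 < s.1)] g = Iset R.
  move=> g zg; rewrite sec_eq; apply/seteqP; split => x /=; first by case.
  by move=> h; split.
rewrite /Phi1 sem_diam (sem_Phi0 _ _ _ e0 e1) /half ratr_half.
apply/seteqP; split => -[x g] /= [Ss H]; split => //.
- have [/andP[x0 x1] _] := Ss.
  case: (pselect (is_zero lt g)) => zg.
    move: H; rewrite tau_z // secz // H0 -EFinM lte_fin => H; exfalso.
    clear -x0 x1 H; simpl in *; lra.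
  split => // za.
  move: H.
  have -> : tauS lt alpha q m0 m1 0 (x,g)
     [set s | Sstate R B s /\ (is_zero lt s.2 -> 2^-1 < s.1)] = (2^-1)%:E.
    by apply: tau_nz; rewrite /= ?secz.
  by rewrite ltxx.
- case: H => zg za.
  have -> : tauS lt alpha q m0 m1 0 (x,g)
     [set s | Sstate R B s /\ (is_zero lt s.2 -> 2^-1 < s.1)] = 1%E.
    by apply: tau_nz; rewrite /= ?secnz.
  by rewrite lte_fin invf_lt1 // ltr1n.
Qed.

Lemma sem_step (R : realType) (B : Type) (lt : B -> B -> Prop) alpha (q : nat -> R) m0 m1
  (D : B -> Prop) n f :
  extends_lebesgue m0 -> extends_lebesgue m1 ->
  (forall g, is_zero lt g -> ~ D g) ->
  sem (Sstate R B) (tauS lt alpha q m0 m1) f = [set s | Sstate R B s /\ D s.2] ->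
  sem (Sstate R B) (tauS lt alpha q m0 m1) (FDiam n 0 f) =
  [set s | Sstate R B s /\ (~ is_zero lt s.2 /\ D (alpha n s.2))].
Proof.
move=> e0 e1 hz hf; have [Z0 I0 _] := mfacts e0; have [Z1 I1 _] := mfacts e1.
rewrite sem_diam hf rmorph0.
apply/seteqP; split => -[x g] /= [Ss H]; split => //.
- case: (pselect (is_zero lt g)) => zg.
    by move: H; rewrite tau_z // sec_D0 ?Z0 ?mule0 ?ltxx //; exact: hz.
  split => //; apply: boolp.contrapT => nD; move: H.
  have -> : tauS lt alpha q m0 m1 n (x,g) [set s | Sstate R B s /\ D s.2] = 0%E.
    by apply: tau_nz; rewrite /= ?sec_D0.
  by rewrite ltxx.
- case: H => zg hD.
  have -> : tauS lt alpha q m0 m1 n (x,g) [set s | Sstate R B s /\ D s.2] = 1%E.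
    by apply: tau_nz; rewrite /= ?sec_D1.
  by rewrite lte01.
Qed.

Fixpoint Wf (w : seq nat) : Defs.form :=
  match w with [::] => Phi1 | n :: w' => FDiam n 0 (Wf w') end.

Lemma wf_Wf w : wf_form (Wf w).
Proof.
elim: w => [|n w IH] /=.
  by rewrite /Phi1 /Phi0 /=.
by rewrite IH.
Qed.
Lemma dummy_ : True. Proof.
by [].
Qed.

Lemma sem_Wf (R : realType) (B : Type) (lt : B -> B -> Prop) alpha (q : nat -> R) m0 m1 w :
  extends_lebesgue m0 -> extends_lebesgue m1 ->
  sem (Sstate R B) (tauS lt alpha q m0 m1) (Wf w) =
  [set s | Sstate R B s /\ Dw lt alpha w s.2].
Proof.
move=> e0 e1; elim: w => [|n w IH]; first exact: sem_Phi1.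
rewrite /=; apply: sem_step => //.
by case: w {IH} => [|k w] g zg /= [].
Qed.

Theorem lemma5p5 (R : realType) (B : Type) (lt : B -> B -> Prop)
  (alpha : nat -> B -> B) (V : set R) (m0 m1 : set R -> \bar R)
  (q : nat -> R) :
  ordinal_le_omega1 lt ->
  alpha_spec lt alpha ->
  V `<=` Iset R ->
  ~ lebesgue_measurable V ->
  measure_on (BV V) m0 -> measure_on (BV V) m1 ->
  extends_lebesgue m0 -> extends_lebesgue m1 ->
  m0 V <> m1 V ->
  rat_enum q ->
  forall a : B,
    sigma_L (Sstate R B) (tauS lt alpha q m0 m1) (Iset R `*` [set a]).
Proof.
move=> ord asp _ _ _ _ e0 e1 _ _ a.
have [_ I0 _] := mfacts e0; have [_ I1 _] := mfacts e1.
set S := Sstate R B.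
set tau := tauS lt alpha q m0 m1.
have [G0 GD GU] : sigma_algebra S (sigma_L S tau) := smallest_sigma_algebra _ _.
have Gsem : forall f, wf_form f -> sigma_L S tau (sem S tau f).
  by move=> f wf; apply: sub_sigma_algebra; exists f.
have GS : sigma_L S tau S by have := GD _ G0; rewrite setD0.
set Z := [set s | S s /\ is_zero lt s.2].
have GZ : sigma_L S tau Z.
  pose r k : rat := 1 - (k.+2%:R)^-1.
  have rE k : ratr (r k) = 1 - (k.+2%:R)^-1 :> R.
    by rewrite rmorphB rmorph1 fmorphV rmorph_nat.
  have Kpos k : 0 < (k.+2%:R : R)^-1 by rewrite invr_gt0 ltr0n.
  have wfr k : wf_form (FDiam 0 (r k) FTop).
    rewrite /= andbT /r; apply/andP; split; last by rewrite gerDl oppr_le0 invr_ge0 ler0n.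
    by rewrite subr_ge0 invf_le1 ?ltr0n // ler1n.
  suff -> : Z = \bigcup_k (S `\` sem S tau (FDiam 0 (r k) FTop)).
    by apply: (GU) => k; apply: (GD); apply: (Gsem).
  apply/seteqP; split => -[x g] /=.
  - move=> [Ss zg]; have [/andP[x0 x1] _] := Ss.
    pose K := Num.Def.archi_bound ((1 - x)^-1).
    have hK : (1 - x)^-1 < K%:R by apply: archi_boundP; rewrite invr_ge0 subr_ge0 ltW.
    exists K => //; split => // -[_]; rewrite /tau tau_z // sec_S I0 mule1 lte_fin rE.
    apply/negP; rewrite -leNgt.
    have hKK : (K%:R : R) <= K.+2%:R by rewrite ler_nat; apply: leq_trans (leqnSn _) (leqnSn _).
    have t1 : (1 - x) * (1 - x)^-1 = 1 by rewrite mulfV // subr_eq0 gt_eqF.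
    have t2 : (K.+2%:R : R) * (K.+2%:R)^-1 = 1 by rewrite mulfV // pnatr_eq0.
    have := Kpos K; move: t1 t2 hK hKK x1.
    set u := (1 - x)^-1; set v := (K.+2%:R : R)^-1; set w := (K.+2%:R : R).
    move=> t1 t2 hK hKK x1 hv.
    have hw : 0 < w by rewrite /w ltr0n.
    have huw : u < w by apply: lt_le_trans hKK.
    have h1 : (1 - x) * u < (1 - x) * w by rewrite ltr_pM2l // subr_gt0.
    rewrite t1 in h1.
    have : v * w <= (1 - x) * w by rewrite mulrC t2 ltW.
    rewrite ler_pM2r // => h; clear -h; rewrite /=; lra.
  - move=> [k _ [Ss H]]; split => //.
    apply: boolp.contrapT => zg; apply: H; split => //.
    have -> : tau 0 (x, g) S = 1%E by apply: tau_nz; rewrite ?sec_S.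
    by rewrite lte_fin rE gtrBl.
case: (pselect (is_zero lt a)) => za.
  suff -> : Iset R `*` [set a] = Z by [].
  apply/seteqP; split => -[x g] /=.
  - by move=> [xI ->]; split.
  - by move=> [[xI _] zg]; split => //; exact: (zero_uniq ord zg za).
pose E k := match unpickle k with
  | Some w => if pselect (Dw lt alpha w a) then sem S tau (Wf w)
              else S `\` sem S tau (Wf w)
  | None => S end.
pose F k := match k with 0%N => Z | k'.+1 => S `\` E k' end.
have GE k : sigma_L S tau (E k).
  rewrite /E; case: (unpickle k) => [w|//].
  by destruct (pselect _); [|apply: (GD)]; apply: (Gsem); exact: wf_Wf.
suff -> : Iset R `*` [set a] = S `\` \bigcup_k F k.
  by apply: (GD); apply: (GU) => -[|k] /=; [|apply: (GD)].
have semW w : sem S tau (Wf w) = [set s | S s /\ Dw lt alpha w s.2].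
  exact: sem_Wf.
apply/seteqP; split => -[x g] /=.
- move=> [xI eg]; subst g.
  have Ss : S (x, a) by split.
  split => // -[[|k] _ /=]; first by case.
  case=> _; apply; rewrite /E; case: (unpickle k) => [w|//].
  destruct (pselect _) as [hD|hD]; rewrite semW //=.
  by split => // -[].
- move=> [Ss H]; split; first by case: Ss.
  have nzg : ~ is_zero lt g by move=> zg; apply: H; exists 0%N.
  apply: (Dw_inj ord asp nzg za) => w.
  have Ew : E (pickle w) (x, g).
    apply: boolp.contrapT => nE; apply: H; exists (pickle w).+1 => //.
  move: Ew; rewrite /E pickleK; destruct (pselect _) as [hD|hD]; rewrite semW /=.
  + by case=> _ h; split.
  + move=> [_ h]; split => // h'; exfalso; exact: h.
Qed.
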